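(* Let $M=(S,R,V)$ and $M'=(S',R',V')$ be finite epistemic models for the same finite set of agents $A$ and set of atoms $P$, such that only finitely many atoms are relevant in $M\cup M'$, and let $s\in S$, $s'\in S'$. Assume $(s,s)\in R(a)$ for every agent $a\in A$, and assume $M$ is a bisimulation contraction. Let $\mathsf{U}'_r=(S',R',\mathsf{pre},\mathsf{post})$ be the update model with event set $S'$, accessibility relations $R'(a)$, $\mathsf{pre}(t')=\delta_{(M,s)}$ for all $t'\in S'$, and, for every relevant atom $p$, $\mathsf{post}(t')(p)=\top$ if $t'\in V'(p)$ and $\bot$ otherwise (irrelevant atoms unchanged). Then $M\otimes\mathsf{U}'_r$ is isomorphic to $M'$.
   Context: An epistemic model is $M=(S,R,V)$ with $S$ a nonempty set, $R:A\to\wp(S\times S)$, $V:P\to\wp(S)$. An atom is relevant in a model if its valuation is neither empty nor the whole domain; ''relevant in $M\cup M'$'' refers to the disjoint union, so an irrelevant atom has the same constant value throughout both models. Bisimulation is the standard notion (atoms agree on linked states, forth and back conditions for each agent's relation); a bisimulation contraction is a model in which any two bisimilar states are identical. The language $\mathcal{L}$ has atoms, $\neg$, $\wedge$, modalities $[a]$, common knowledge modalities $[B^*]$ and update modalities $[\mathsf{U},\mathsf{e}]$. For a finite pointed model $(M,u)$, $\delta_{(M,u)}$ is a characteristic formula: for all formulas $\psi$, $(M,u)\models\psi$ iff $\delta_{(M,u)}\models\psi$. An update model $\mathsf{U}=(\mathsf{E},\mathsf{R},\mathsf{pre},\mathsf{post})$ has finite nonempty event set $\mathsf{E}$, relations $\mathsf{R}(a)\subseteq\mathsf{E}\times\mathsf{E}$,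 preconditions $\mathsf{pre}(\mathsf{e})\in\mathcal{L}$ and postconditions $\mathsf{post}(\mathsf{e}):P\to\mathcal{L}$ differing from the identity on finitely many atoms. The product $M\otimes\mathsf{U}$ has domain $\{(t,\mathsf{f}) : (M,t)\models\mathsf{pre}(\mathsf{f})\}$, $((t,\mathsf{f}),(u,\mathsf{g}))$ in the relation for $a$ iff $(t,u)\in R(a)$ and $(\mathsf{f},\mathsf{g})\in\mathsf{R}(a)$, and $(t,\mathsf{f})$ satisfies $p$ iff $(M,t)\models\mathsf{post}(\mathsf{f})(p)$. *)

(* Defs.v *)
From mathcomp Require Import all_boot.
From Stdlib Require Import Relation_Operators List.

Unset Implicit Arguments.
Unset Strict Implicit.
Unset Printing Implicit Defensive.

Section DEL.
Variables (A : finType) (P : Type).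

(* Syntax of the language L: atoms, negation, conjunction, [a], [B*],
   and update modalities [U,e] with U having event set 'I_n.+1
   (finite, nonempty), relations, preconditions and postconditions. *)
Inductive form : Type :=
| Atom of P
| Neg of form
| And of form & form
| Box of A & form
| CK of {set A} & form
| Upd (n : nat) (ER : A -> rel 'I_n.+1) (pre : 'I_n.+1 -> form)
      (post : 'I_n.+1 -> P -> form) (e : 'I_n.+1) (f : form).

Fixpoint wf (phi : form) : Prop :=
  match phi with
  | Atom _ => True
  | Neg f => wf f
  | And f g => wf f /\ wf g
  | Box _ f => wf f
  | CK _ f => wf f
  | Upd n ER pre post e f =>
      (forall e', wf (pre e')) /\
      (forall e' p, wf (post e' p)) /\
      (forall e', exists l : list P, forall p, ~ List.In p l -> post e' p = Atom p) /\
      wf f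
  end.

Definition Bot (p : P) : form := And (Atom p) (Neg (Atom p)).
Definition Top (p : P) : form := Neg (Bot p).

Record model := Model {
  state : Type;
  acc : A -> state -> state -> Prop;
  val : P -> state -> Prop }.

(* Product of a model with an update structure whose preconditions and
   postconditions are given semantically (as truth sets in M). *)
Definition prodm (M : model) (E : Type) (ER : A -> E -> E -> bool)
  (preS : E -> state M -> Prop) (postS : E -> P -> state M -> Prop) : model :=
  @Model {x : state M * E | preS x.2 x.1}
    (fun a x y => @acc M a (sval x).1 (sval y).1 /\ ER a (sval x).2 (sval y).2)
    (fun p x => postS (sval x).2 p (sval x).1).

Fixpoint sat (phi : form) (M : model) (w : state M) {struct phi} : Prop :=
  match phi with
  | Atom p => @val M p w
  | Neg f => ~ sat f M w
  | And f g => sat f M w /\ sat g M w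
  | Box a f => forall v, @acc M a w v -> sat f M v
  | CK B f =>
      forall v, clos_refl_trans (state M) (fun x y => exists2 b, b \in B & @acc M b x y) w v ->
        sat f M v
  | Upd n ER pre post e f =>
      forall H : sat (pre e) M w,
        sat f (prodm M 'I_n.+1 ER (fun e' t => sat (pre e') M t)
                        (fun e' p t => sat (post e' p) M t))
              (exist (fun x : state M * 'I_n.+1 => sat (pre x.2) M x.1) (w, e) H)
  end.

Definition entails (delta psi : form) : Prop :=
  forall (N : model) (w : state N), sat delta N w -> sat psi N w.

Definition characteristic (M : model) (u : state M) (delta : form) : Prop :=
  wf delta /\ forall psi, wf psi -> (sat psi M u <-> entails delta psi).

Definition bisimulation (M N : model) (Z : state M -> state N -> Prop) : Prop :=
  forall x y, Z x y ->
    (forall p, @val M p x <-> @val N p y) /\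
    (forall a x', @acc M a x x' -> exists2 y', @acc N a y y' & Z x' y') /\
    (forall a y', @acc N a y y' -> exists2 x', @acc M a x x' & Z x' y').

Definition bisimilar (M N : model) (x : state M) (y : state N) : Prop :=
  exists2 Z, bisimulation M N Z & Z x y.

Definition bisim_contraction (M : model) : Prop :=
  forall x y : state M, bisimilar M M x y -> x = y.

Definition isomorphic (M N : model) : Prop :=
  exists f : state M -> state N,
    bijective f /\
    (forall a x y, @acc M a x y <-> @acc N a (f x) (f y)) /\
    (forall p x, @val M p x <-> @val N p (f x)).

Definition fmodel (S : finType) (R : A -> rel S) (V : P -> pred S) : model :=
  @Model S (fun a x y => R a x y) (fun p x => V p x).

Definition relevant (S S' : finType) (V : P -> pred S) (V' : P -> pred S') (p : P) : bool :=
  ([exists t, V p t] || [exists t', V' p t']) &&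
  ([exists t, ~~ V p t] || [exists t', ~~ V' p t']).

Definition post_r (S S' : finType) (V : P -> pred S) (V' : P -> pred S')
  (t' : S') (p : P) : form :=
  if relevant S S' V V' p then (if V' p t' then Top p else Bot p) else Atom p.

Definition prod_Ur (S S' : finType) (R : A -> rel S) (V : P -> pred S)
  (R' : A -> rel S') (V' : P -> pred S') (delta : form) : model :=
  prodm (fmodel S R V) S' R' (fun (_ : S') t => sat delta (fmodel S R V) t)
           (fun t' p t => sat (post_r S S' V V' t' p) (fmodel S R V) t).

End DEL.

Arguments Atom {A P}.
Arguments Neg {A P}.
Arguments And {A P}.
Arguments Box {A P}.
Arguments CK {A P}.
Arguments Upd {A P}.

(* Main.v *)
Require Import Defs.
From mathcomp Require Import all_boot.
From Stdlib Require Import List Classical ProofIrrelevance.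
From mathcomp Require Import seq.

Definition MEq (A : finType) (P : Type) (M : model A P) (x y : state A P M) :=
  forall psi, wf A P psi -> (sat A P psi M x <-> sat A P psi M y).

Lemma conj_list (A : finType) (P : Type) (S : finType) (R : A -> rel S) (V : P -> pred S)
  (delta : form A P) (Hd : wf A P delta) (x' : S) (Q : S -> Prop) (l : list S) :
  (forall y', y' \in l -> Q y' -> exists psi, wf A P psi /\ sat A P psi (fmodel A P S R V) x'
       /\ ~ sat A P psi (fmodel A P S R V) y') ->
  exists psi, wf A P psi /\ sat A P psi (fmodel A P S R V) x' /\
     forall y', y' \in l -> Q y' -> ~ sat A P psi (fmodel A P S R V) y'.
Proof.
elim: l => [|y l IH] H.
  exists (Neg (And delta (Neg delta))); split; first by split.
  split; first by simpl; tauto.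
  by move=> y'; rewrite in_nil.
have [psi [Hw [Hx Hl]]] : exists psi, wf A P psi /\ sat A P psi (fmodel A P S R V) x' /\
     forall y', y' \in l -> Q y' -> ~ sat A P psi (fmodel A P S R V) y'.
  by apply: IH => y' Hy'; apply: H; rewrite in_cons Hy' orbT.
case: (classic (Q y)) => Qy.
  have [phi [Hw' [Hx' Hy]]] := H y (mem_head _ _) Qy.
  exists (And psi phi); split; first by split.
  split; first by split.
  move=> y'; rewrite in_cons => /orP [/eqP -> _|Hin Qy'] /= [H1 H2].
    by apply: Hy.
  by apply: (Hl y' Hin Qy').
exists psi; split => //; split => //.
move=> y'; rewrite in_cons => /orP [/eqP -> //|Hin Qy'].
by apply: Hl.
Qed.

Lemma forth (A : finType) (P : Type) (S : finType) (R : A -> rel S) (V : P -> pred S)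
  (delta : form A P) (Hd : wf A P delta) (x y : S) :
  MEq A P (fmodel A P S R V) x y ->
  forall a x', R a x x' -> exists2 y', R a y y' & MEq A P (fmodel A P S R V) x' y'.
Proof.
move=> Hxy a x' Rx.
case: (classic (exists2 y', R a y y' & MEq A P (fmodel A P S R V) x' y')) => // Hn.
exfalso.
have Hd' : forall y', y' \in enum S -> R a y y' -> exists psi, wf A P psi /\
   sat A P psi (fmodel A P S R V) x' /\ ~ sat A P psi (fmodel A P S R V) y'.
  move=> y' _ Ry.
  have : ~ MEq A P (fmodel A P S R V) x' y' by move=> HM; apply: Hn; exists y'.
  move/not_all_ex_not => [psi Hpsi].
  have Hw : wf A P psi by apply: NNPP => Hw; apply: Hpsi => Hw'; contradiction.
  case: (classic (sat A P psi (fmodel A P S R V) x')) => Hs.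
    exists psi; split => //; split => // Hs'; apply: Hpsi => _; tauto.
  exists (Neg psi); split => //; split => //= Hs'.
  apply: Hpsi => _; split => H; contradiction.
have [psi [Hw [Hx Hl]]] := conj_list A P S R V delta Hd x' (fun y' => R a y y') (enum S) Hd'.
have := Hxy (Neg (Box a (Neg psi))) Hw.
move=> /= [H1 _]; apply: H1.
- by move=> Hb; apply: (Hb x').
- by move=> v Rv; apply: Hl => //; rewrite mem_enum.
Qed.

Lemma meq_bisim (A : finType) (P : Type) (S : finType) (R : A -> rel S) (V : P -> pred S)
  (delta : form A P) (Hd : wf A P delta) :
  bisimulation A P (fmodel A P S R V) (fmodel A P S R V) (MEq A P (fmodel A P S R V)).
Proof.
move=> x y Hxy; split; [|split].
- by move=> p; apply: (Hxy (Atom p)).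
- exact: forth Hd x y Hxy.
- move=> a y' Ry.
  have Hyx : MEq A P (fmodel A P S R V) y x by move=> psi Hw; split => H; apply/(Hxy psi Hw).
  have [x' Rx Hm] := forth A P S R V delta Hd y x Hyx a y' Ry.
  by exists x' => // psi Hw; split => H; apply/(Hm psi Hw).
Qed.

Theorem corollary1 (A : finType) (P : Type)
  (S : finType) (R : A -> rel S) (V : P -> pred S)
  (S' : finType) (R' : A -> rel S') (V' : P -> pred S')
  (s : S) (s' : S') (delta : form A P) :
  (exists l : list P, forall p, relevant P S S' V V' p -> List.In p l) ->
  (forall a, R a s s) ->
  bisim_contraction A P (fmodel A P S R V) ->
  characteristic A P (fmodel A P S R V) s delta ->
  isomorphic A P (prod_Ur A P S S' R V R' V' delta) (fmodel A P S' R' V').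
Proof.
move=> _ Rss Hc [Hd Hch].
have Hds : sat A P delta (fmodel A P S R V) s by apply/(Hch delta Hd).
have Heq : forall t, sat A P delta (fmodel A P S R V) t -> t = s.
  move=> t Ht; apply: Hc; exists (MEq A P (fmodel A P S R V)); first exact: (meq_bisim _ _ _ _ _ delta Hd).
  move=> psi Hw; split => H.
    apply: NNPP => Hn.
    have : sat A P (Neg psi) (fmodel A P S R V) s by [].
    by move/(Hch (Neg psi) Hw) => /(_ _ _ Ht).
  by move/(Hch psi Hw): H => /(_ _ _ Ht).
exists (fun x => (sval x).2); split; [|split].
- exists (fun t' => exist (fun x : S * S' => sat A P delta (fmodel A P S R V) x.1) (s, t') Hds).
    move=> [[t t'] H] /=.
    have E : t = s := Heq _ H; subst t.
    by rewrite (proof_irrelevance _ H Hds).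
  by [].
- move=> a [[t t'] H] [[u u'] H'] /=.
  have E : t = s := Heq _ H; subst t.
  have E : u = s := Heq _ H'; subst u.
  by rewrite Rss; split => [[]|].
- move=> p [[t t'] H] /=.
  have E : t = s := Heq _ H; subst t.
  rewrite /post_r.
  case Hr: (relevant P S S' V V' p).
    by case: (V' p t') => /=; split => //; tauto.
  move: Hr; rewrite /relevant /=.
  case Es: (V p s); case Et: (V' p t') => //= Hr; exfalso.
  - have E1 : [exists t, V p t] by apply/existsP; exists s.
    have E2 : [exists t, ~~ V' p t] by apply/existsP; exists t'; rewrite Et.
    by rewrite E1 E2 orbT in Hr.
  - have E1 : [exists t, V' p t] by apply/existsP; exists t'.
    have E2 : [exists t, ~~ V p t] by apply/existsP; exists s; rewrite Es.
    by rewrite E1 E2 orbT in Hr.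
Qed.
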